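(* Let $q$ be a prime power, $2\le k\le n$, and let $\mathcal{C} \subseteq \mathbb{F}_q^n$ be a linear code of dimension $k$. Then $$\mathbb{E}[\mathcal{C}] = nH_n - \sum_{s=k}^{n-1} \frac{\alpha(\mathcal{C},s)}{\binom{n-1}{s}}.$$
   Context: $H_m = \sum_{i=1}^m 1/i$ is the $m$-th harmonic number ($H_0=0$). For a linear code $\mathcal{C}\subseteq\mathbb{F}_q^n$ of dimension $k$, $\mathbb{E}[\mathcal{C}]$ is $\mathbb{E}[G]$ for any generator matrix $G\in\mathbb{F}_q^{k\times n}$ of $\mathcal{C}$, where $\mathbb{E}[G]$ is the expected number of draws when columns of $G$ are drawn independently and uniformly at random from its $n$ columns (with repetition) until the drawn columns span $\mathbb{F}_q^k$; this does not depend on $G$. Writing $g_j$ for the $j$-th column of a generator matrix $G$ of $\mathcal{C}$, for $0\le s\le n$ let $\alpha(\mathcal{C},s) = |\{S\subseteq\{1,\dots,n\} : |S|=s,\ \langle g_j : j\in S\rangle = \mathbb{F}_q^k\}|$, the number of information sets of $\mathcal{C}$ of size $s$ (independent of the choice of $G$). *)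

(* Defs.v *)
From HB Require Import structures.
From mathcomp Require Import all_boot all_order all_algebra.
From mathcomp Require Import all_classical all_reals.
From mathcomp Require Import ereal sequences.
Set Implicit Arguments. Unset Strict Implicit. Unset Printing Implicit Defensive.
Import Order.TTheory GRing.Theory Num.Theory.
Local Open Scope ring_scope.

(* G : 'M[F]_(k, n) is a generator matrix; its j-th column is col j G,
   i.e. the row vector row j G^T in F^k. *)

Definition spans (F : fieldType) (k n : nat) (G : 'M[F]_(k, n)) (S : {set 'I_n}) : bool :=
  row_full (\sum_(j in S) <<row j G^T>>)%MS.

Definition alpha (F : finFieldType) (k n : nat) (G : 'M[F]_(k, n)) (s : nat) : nat :=
  #|[set S : {set 'I_n} | (#|S| == s) && spans G S]|.

(* Number of sequences of t draws (uniform, with repetition, from the n columns)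
   for which the stopping time equals t: the t drawn columns span F^k but the
   first t-1 do not. *)
Definition stop_count (F : finFieldType) (k n : nat) (G : 'M[F]_(k, n)) (t : nat) : nat :=
  #|[set x : t.-tuple 'I_n |
       spans G [set j | j \in (x : seq 'I_n)]
       && ~~ spans G [set j | j \in take t.-1 (x : seq 'I_n)]]|.

Definition prob_stop (R : realType) (F : finFieldType) (k n : nat) (G : 'M[F]_(k, n))
  (t : nat) : R := (stop_count G t)%:R / (n%:R ^+ t).

Definition expected_draws (R : realType) (F : finFieldType) (k n : nat)
  (G : 'M[F]_(k, n)) : \bar R :=
  (\sum_(t <oo) ((t%:R * prob_stop R G t)%:E))%E.

Definition harmonic_number (R : realType) (m : nat) : R := \sum_(i < m) (i.+1%:R)^-1.

(* Main.v *)
Require Import Defs.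
From HB Require Import structures.
From mathcomp Require Import all_boot all_order all_algebra.
From mathcomp Require Import all_classical all_reals.
From mathcomp Require Import ereal sequences.
From mathcomp Require Import topology normedtype.
From mathcomp Require Import ring lra.
Import Order.TTheory GRing.Theory Num.Theory.
Set Implicit Arguments. Unset Strict Implicit. Unset Printing Implicit Defensive.

Section Comb.
Variables (n : nat).

Definition rct t (p : t.-tuple 'I_n * 'I_n) : t.+1.-tuple 'I_n :=
  Tuple (rcons_tupleP p.1 p.2).

Lemma rct_inj t : injective (@rct t).
Proof.
move=> [y1 j1] [y2 j2] E.
have E1 : rcons y1 j1 = rcons y2 j2 by move/(congr1 val): E.
have ej : j1 = j2.
  by move: (congr1 (last j1) E1); rewrite !last_rcons.
subst j2; congr pair; apply: val_inj; exact: (rcons_injl j1 E1).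
Qed.

Lemma rct_bij t : bijective (@rct t).
Proof.
apply: inj_card_bij; first exact: rct_inj.
by rewrite card_prod !card_tuple card_ord expnSr.
Qed.

Lemma card_rcons t (P : pred (t.+1.-tuple 'I_n)) :
  #|[set x | P x]| = \sum_(j : 'I_n) #|[set y : t.-tuple 'I_n | P (rct (y, j))]|.
Proof.
rewrite -sum1dep_card big_mkcond /=.
rewrite (reindex (@rct t)) /=; last first. exact: onW_bij (rct_bij t).
rewrite -(pair_bigA _ (fun y j => if P (rct (y, j)) then 1 else 0)) /= exchange_big /=.
by apply: eq_bigr => j _; rewrite -sum1dep_card [RHS]big_mkcond.
Qed.


Definition setof t (x : t.-tuple 'I_n) : {set 'I_n} := [set j | j \in (x : seq 'I_n)].

Lemma setof_rct t (y : t.-tuple 'I_n) j : setof (rct (y, j)) = j |: setof y.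
Proof. by apply/setP => i; rewrite !inE /= mem_rcons inE. Qed.

Lemma take_rct t (y : t.-tuple 'I_n) j : take t (rct (y, j)) = y.
Proof. by rewrite /= -cats1 take_size_cat // size_tuple. Qed.

Lemma setof0 (x : 0.-tuple 'I_n) : setof x = finset.set0.
Proof. by rewrite (tuple0 x); apply/setP => i; rewrite !inE. Qed.

Lemma card_split t (P Q : pred (t.-tuple 'I_n)) : (forall y, ~~ P y -> Q y) ->
  #|[set y | P y && Q y]| + #|[set y | ~~ P y]| = #|[set y | Q y]|.
Proof.
move=> H; rewrite -!sum1dep_card [X in X + _]big_mkcond [X in _ + X]big_mkcond.
rewrite [RHS]big_mkcond -big_split /=; apply: eq_bigr => y _.
by case: (boolP (P y)) => Py; case: (boolP (Q y)) => Qy //; move: (H _ Py); rewrite (negbTE Qy).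
Qed.

Lemma card_or t (P Q : pred (t.-tuple 'I_n)) : (forall y, ~~ (P y && Q y)) ->
  #|[set y | P y || Q y]| = #|[set y | P y]| + #|[set y | Q y]|.
Proof.
move=> H; rewrite -!sum1dep_card [LHS]big_mkcond [X in X + _]big_mkcond [X in _ + X]big_mkcond.
rewrite -big_split /=; apply: eq_bigr => y _.
by move: (H y); case: (P y); case: (Q y).
Qed.

End Comb.

Section Spans.
Variables (F : finFieldType) (k n : nat) (G : 'M[F]_(k, n)).

Lemma rank_sum_le (S : {set 'I_n}) : \rank (\sum_(j in S) <<row j G^T>>)%MS <= #|S|.
Proof.
rewrite -sum1_card.
apply: (big_ind2 (fun (A : 'M[F]_k) m => \rank A <= m)) => //.
- by rewrite mxrank0.
- move=> A1 m1 A2 m2 h1 h2; apply: leq_trans (mxrank_adds_leqif _ _) _.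
  exact: leq_add.
- by move=> j _; rewrite genmxE rank_leq_row.
Qed.

Lemma spans_card S : spans G S -> k <= #|S|.
Proof. by rewrite /spans /row_full => /eqP <-; exact: rank_sum_le. Qed.

Lemma spans_mono (S T : {set 'I_n}) : S \subset T -> spans G S -> spans G T.
Proof.
move=> sST; rewrite /spans /row_full => /eqP fS.
rewrite eqn_leq rank_leq_col -{1}fS; apply: mxrankS.
apply/sumsmx_subP => j jS; apply: (sumsmx_sup j) => //.
exact: (fintype.subsetP sST).
Qed.

Lemma spans0 : 0 < k -> ~~ spans G finset.set0.
Proof.
move=> k0; rewrite /spans /row_full big_pred0; last by move=> j; rewrite inE.
by rewrite mxrank0 eq_sym -lt0n k0.
Qed.

Lemma spansT : \rank G = k -> spans G finset.setT.
Proof.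
move=> rG; rewrite /spans /row_full eqn_leq rank_leq_col /=.
rewrite -{1}rG -mxrank_tr; apply: mxrankS; apply/row_subP => j.
by rewrite (sumsmx_sup j) ?inE // genmxE.
Qed.

End Spans.

Section Count.
Variables (F : finFieldType) (k n : nat) (G : 'M[F]_(k, n)).

Definition Ncnt t := #|[set x : t.-tuple 'I_n | ~~ spans G (setof x)]|.
Definition fcnt (S : {set 'I_n}) t := #|[set x : t.-tuple 'I_n | setof x == S]|.
Definition gcnt (S : {set 'I_n}) t := #|[set x : t.-tuple 'I_n | setof x \subset S]|.

Lemma stop0 : 0 < k -> stop_count G 0 = 0.
Proof.
move=> k0; apply/eqP; rewrite cards_eq0; apply/eqP/setP => x; rewrite !inE.
by have := setof0 x; rewrite /setof => ->; rewrite (negbTE (spans0 G k0)).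
Qed.

Lemma stop_rec t : stop_count G t.+1 + Ncnt t.+1 = n * Ncnt t.
Proof.
rewrite /stop_count /Ncnt /= !(card_rcons (t := t)) -big_split /=.
rewrite -[n in n * _]card_ord -sum_nat_const; apply: eq_bigr => j _.
have -> : #|[set y : t.-tuple 'I_n | spans G [set j0 | j0 \in (rct (y, j) : seq _)]
     && ~~ spans G [set j0 | j0 \in take t (rct (y, j))]]|
   = #|[set y : t.-tuple 'I_n | spans G (j |: setof y) && ~~ spans G (setof y)]|.
  by apply: eq_card => y; rewrite !inE take_rct -setof_rct.
have -> : #|[set y : t.-tuple 'I_n | ~~ spans G [set j0 | j0 \in (rct (y, j) : seq _)]]|
   = #|[set y : t.-tuple 'I_n | ~~ spans G (j |: setof y)]|.
  by apply: eq_card => y; rewrite !inE -setof_rct.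
apply: card_split => y; apply: contra; apply: spans_mono; exact: finset.subsetUr.
Qed.

Lemma f_rec S t : fcnt S t.+1 = #|S| * fcnt S t + \sum_(j in S) fcnt (S :\ j) t.
Proof.
rewrite /fcnt card_rcons -sum1_card big_distrl /= -big_split /=.
rewrite [LHS](bigID (fun j => j \in S)) /= [X in _ + X]big1 ?addn0.
  apply: eq_bigr => j jS; rewrite mul1n -card_or.
    apply: eq_card => y; rewrite !inE setof_rct.
    case: (boolP (j \in setof y)) => jy.
      rewrite (finset.setUidPr _); last by rewrite finset.sub1set.
      case: eqP => [->|] //= ne; apply/esym/negbTE/eqP => E.
      by move: jy; rewrite E !inE eqxx.
    apply/eqP/idP.
      move=> E; apply/orP; right; apply/eqP; rewrite -E finset.setU1K //.
    case/orP => /eqP E; first by move: jy; rewrite E jS.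
    by rewrite E finset.setD1K.
  move=> y; apply/negP => /andP [/eqP E1 /eqP E2]; move: jS; rewrite -E1 E2 !inE eqxx.
  done.
move=> j jS; apply/eqP; rewrite cards_eq0; apply/eqP/setP => y; rewrite !inE.
apply/negbTE; apply: contra jS => /eqP <-; rewrite setof_rct !inE eqxx. done.
Qed.


Lemma g_rec S t : gcnt S t.+1 = #|S| * gcnt S t.
Proof.
rewrite /gcnt card_rcons -sum1_card big_distrl /= [LHS](bigID (fun j => j \in S)) /=.
rewrite [X in _ + X]big1 ?addn0.
  apply: eq_bigr => j jS; rewrite mul1n; apply: eq_card => y.
  by rewrite !inE setof_rct finset.subUset finset.sub1set jS.
move=> j jS; apply/eqP; rewrite cards_eq0; apply/eqP/setP => y; rewrite !inE.
by rewrite setof_rct finset.subUset finset.sub1set (negbTE jS).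
Qed.

Lemma g0 S : gcnt S 0 = 1.
Proof.
have -> : 1 = #|{: 0.-tuple 'I_n}| by rewrite card_tuple.
by rewrite /gcnt; apply: eq_card => x; rewrite !inE setof0 finset.sub0set.
Qed.

Lemma gE S t : gcnt S t = #|S| ^ t.
Proof. by elim: t => [|t IH]; rewrite ?g0 // g_rec IH expnS. Qed.

Lemma f_le S t : fcnt S t <= #|S| ^ t.
Proof.
rewrite -gE; apply: subset_leq_card; apply/fintype.subsetP => x; rewrite !inE.
by move/eqP => ->.
Qed.

Lemma f0 S : fcnt S 0 = (S == finset.set0).
Proof.
case: eqP => [->|ne].
  have -> : true = #|{: 0.-tuple 'I_n}| :> nat by rewrite card_tuple.
  by rewrite /fcnt; apply: eq_card => x; rewrite !inE setof0 eqxx.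
apply/eqP; rewrite cards_eq0; apply/eqP/setP => x; rewrite !inE setof0.
by apply/negbTE/eqP => E; apply: ne.
Qed.

Lemma N_sum t : Ncnt t = \sum_(S : {set 'I_n} | ~~ spans G S) fcnt S t.
Proof.
rewrite /Ncnt -sum1dep_card (partition_big (@setof n t) (fun S => ~~ spans G S)) //=.
apply: eq_bigr => S nS; rewrite sum1dep_card; apply: eq_card => x; rewrite !inE.
by apply: andb_idl => /eqP ->.
Qed.

End Count.

Import numFieldNormedType.Exports.
Local Open Scope classical_set_scope.
Local Open Scope ring_scope.

Section Anal.
Variable R : realType.

Lemma cvg_bigsum (J : Type) (r : seq J) (P : pred J) (f : J -> nat -> R) (l : J -> R) :
  (forall j, P j -> f j @ \oo --> l j) ->
  (fun M => \sum_(j <- r | P j) f j M) @ \oo --> \sum_(j <- r | P j) l j.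
Proof.
move=> H; elim: r => [|j r IH].
  rewrite big_nil; under eq_fun do rewrite big_nil; exact: cvg_cst.
rewrite big_cons; under eq_fun do rewrite big_cons.
case Pj: (P j); last exact: IH.
by apply: cvgD => //; exact: H.
Qed.

Lemma cvg_pow0 (r : R) : 0 <= r -> r < 1 -> (fun M => r ^+ M) @ \oo --> 0.
Proof.
move=> r0 r1; have := @cvg_geometric R 1 r; rewrite ger0_norm // => /(_ r1).
by apply: cvg_trans; apply: near_eq_cvg; near=> M; rewrite /geometric /= mul1r.
Unshelve. all: by end_near.
Qed.

Lemma Mpow_le (s : R) M : 0 <= s -> s < 1 -> M%:R * s ^+ M <= (1 - s)^-1.
Proof.
move=> s0 s1.
have e : \sum_(t < M) s ^+ t = (1 - s ^+ M) / (1 - s).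
  have := geometric_seriesE 1 (negbT (lt_eqF s1) : s != 1) .
  move/(congr1 (fun f => f M)); rewrite /series /= big_mkord mul1r => <-.
  by apply: eq_bigr => t _; rewrite /geometric /= mul1r.
have h1 : M%:R * s ^+ M <= \sum_(t < M) s ^+ t.
  have -> : M%:R * s ^+ M = \sum_(t < M) s ^+ M by rewrite sumr_const card_ord mulr_natl.
  apply: ler_sum => t _.
  by apply: ler_wiXn2l => //; [exact: ltW | exact: ltnW].
apply: (le_trans h1); rewrite e -[X in _ <= X]mul1r; apply: ler_wpM2r; first by rewrite invr_ge0 subr_ge0 ltW.
by rewrite lerBlDr lerDl exprn_ge0.
Qed.

Lemma cvg_Mpow0 (r : R) : 0 <= r -> r < 1 -> (fun M : nat => M%:R * r ^+ M) @ \oo --> 0.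
Proof.
move=> r0 r1; set s := (1 + r) / 2.
have s0 : 0 <= s by rewrite /s; lra.
have s1 : s < 1 by rewrite /s; lra.
have rs : r <= s ^+ 2 by rewrite /s; nra.
apply: (@squeeze_cvgr _ _ _ _ (fun _ => 0) (fun M => s ^+ M * (1 - s)^-1)).
- near=> M; apply/andP; split; first by rewrite mulr_ge0 ?exprn_ge0.
  apply: (@le_trans _ _ (M%:R * (s ^+ M * s ^+ M))).
    rewrite ler_wpM2l // -expr2 -exprM mulnC exprM; apply: lerXn2r => //.
    by rewrite nnegrE exprn_ge0.
  rewrite mulrCA ler_wpM2l ?exprn_ge0 //; exact: Mpow_le.
- exact: cvg_cst.
- rewrite -(mul0r (1 - s)^-1); apply: cvgMl; exact: cvg_pow0.
Unshelve. all: by end_near.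
Qed.

End Anal.

Section PerSet.
Variables (R : realType) (n : nat).
Hypothesis n0 : (0 < n)%N.

Definition cc (s : nat) : R := ('C(n.-1, s)%:R)^-1.
Definition FS (S : {set 'I_n}) (M : nat) : R := \sum_(t < M) (fcnt S t)%:R / n%:R ^+ t.

Lemma nR0 : n%:R != 0 :> R.
Proof. by rewrite pnatr_eq0 -lt0n. Qed.

Lemma FS_rec S M : FS S M.+1 =
  (S == finset.set0)%:R + n%:R^-1 * (#|S|%:R * FS S M + \sum_(j in S) FS (S :\ j) M).
Proof.
rewrite /FS big_ord_recl /= f0 expr0 divr1; congr (_ + _).
rewrite mulr_sumr exchange_big -big_split mulr_sumr /=; apply: eq_bigr => t _.
rewrite /bump /= add1n f_rec natrD natrM natr_sum -mulr_suml exprS.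
have := nR0; have : n%:R ^+ t != 0 :> R by rewrite expf_neq0 // nR0.
move: (n%:R : R) (n%:R ^+ t : R) => a b ha hb.
field. by rewrite ha hb.
Qed.

Lemma FS_diff (S : {set 'I_n}) M : FS S M.+1 - FS S M = (fcnt S M)%:R / n%:R ^+ M.
Proof. by rewrite /FS big_ord_recr /= addrAC subrr add0r. Qed.

Lemma FS_diff0 (S : {set 'I_n}) : (#|S| < n)%N -> (fun M => FS S M.+1 - FS S M) @ \oo --> 0.
Proof.
move=> Sn; have r0 : 0 <= #|S|%:R / n%:R :> R by rewrite divr_ge0.
have r1 : #|S|%:R / n%:R < 1 :> R.
  by rewrite ltr_pdivrMr ?ltr0n // mul1r ltr_nat.
apply: (@squeeze_cvgr _ _ _ _ (fun _ => 0) (fun M => (#|S|%:R / n%:R) ^+ M)).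
- near=> M; rewrite FS_diff; apply/andP; split; first by rewrite divr_ge0 ?exprn_ge0.
  rewrite expr_div_n ler_pM2r ?invr_gt0 ?exprn_gt0 ?ltr0n // -natrX ler_nat.
  exact: f_le.
- exact: cvg_cst.
- exact: cvg_pow0.
Unshelve. all: by end_near.
Qed.

Lemma FS_eq (S : {set 'I_n}) M : (#|S| < n)%N -> FS S M =
  ((S == finset.set0)%:R + n%:R^-1 * \sum_(j in S) FS (S :\ j) M - (FS S M.+1 - FS S M))
   / (1 - #|S|%:R / n%:R).
Proof.
move=> Sn; have h : n%:R - #|S|%:R != 0 :> R.
  by rewrite subr_eq0 eqr_nat neq_ltn Sn orbT.
rewrite FS_rec; have := nR0; move: h.
move: (n%:R : R) (FS S M) (#|S|%:R : R) (\sum_(j in S) FS (S :\ j) M) ((S == finset.set0)%:R : R) => a x c y b h ha.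
field. by rewrite h ha.
Qed.


Lemma FS_cvg s : forall S : {set 'I_n}, #|S| = s -> (s < n)%N -> FS S @ \oo --> cc s.
Proof.
elim: s => [|s IH] S cS sn.
  have S0 : S = finset.set0 by apply/eqP; rewrite -cards_eq0 cS.
  have -> : FS S = fun M => ((S == finset.set0)%:R + n%:R^-1 * \sum_(j in S) FS (S :\ j) M
      - (FS S M.+1 - FS S M)) / (1 - #|S|%:R / n%:R).
    by apply: funext => M; apply: FS_eq; rewrite cS.
  have -> : cc 0 = ((S == finset.set0)%:R + n%:R^-1 * \sum_(j in S) 0 - 0) / (1 - #|S|%:R / n%:R).
    by rewrite /cc S0 eqxx big_set0 cards0 bin0 !mul0r mulr0 !subr0 invr1 addr0 mul1r.
  apply: cvgMl; apply: cvgB; last by apply: FS_diff0; rewrite cS.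
  apply: cvgD; first exact: cvg_cst.
  apply: cvgMr; apply: (@cvg_bigsum _ _ _ _ (fun j => FS (S :\ j)) (fun _ => 0)) => j.
  by rewrite S0 inE.
have Sn : (#|S| < n)%N by rewrite cS.
have -> : FS S = fun M => ((S == finset.set0)%:R + n%:R^-1 * \sum_(j in S) FS (S :\ j) M
    - (FS S M.+1 - FS S M)) / (1 - #|S|%:R / n%:R).
  by apply: funext => M; apply: FS_eq.
have -> : cc s.+1 = ((S == finset.set0)%:R + n%:R^-1 * \sum_(j in S) cc s - 0) / (1 - #|S|%:R / n%:R).
  have nS : (S == finset.set0) = false by rewrite -cards_eq0 cS.
  rewrite nS sumr_const -[cc s *+ _]mulr_natr cS add0r subr0 /cc.
  have hb := mul_bin_left n.-1 s.
  have sn1 : (s < n.-1)%N by move: sn; case: (n) => //.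
  have C0 : ('C(n.-1, s)%:R : R) != 0 by rewrite pnatr_eq0 -lt0n bin_gt0 ltnW.
  have C1 : ('C(n.-1, s.+1)%:R : R) != 0 by rewrite pnatr_eq0 -lt0n bin_gt0.
  have ns : (n%:R - s.+1%:R : R) != 0 by rewrite subr_eq0 eqr_nat neq_ltn sn orbT.
  have e : (s.+1%:R * 'C(n.-1, s.+1)%:R : R) = (n%:R - s.+1%:R) * 'C(n.-1, s)%:R.
    have e' : (n.-1 - s = n - s.+1)%N by case: (n) sn => //= m; rewrite subSS.
    by rewrite -natrM hb e' natrM natrB // ltnW.
  have s0 : (s.+1%:R : R) != 0 by rewrite pnatr_eq0.
  have e2 : ('C(n.-1, s.+1)%:R : R) = (n%:R - s.+1%:R) * 'C(n.-1, s)%:R / s.+1%:R.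
    by rewrite -e (mulrC (s.+1%:R)) mulfK.
  rewrite e2; have := nR0.
  move: ns C0 s0; move: (n%:R : R) (s.+1%:R : R) ('C(n.-1, s)%:R : R) => a b c h1 h2 h3 h4.
  field. by rewrite h1 h2 h3 h4.
apply: cvgMl; apply: cvgB; last exact: FS_diff0.
apply: cvgD; first exact: cvg_cst.
apply: cvgMr; apply: (@cvg_bigsum _ _ _ _ (fun j => FS (S :\ j)) (fun _ => cc s)) => j jS.
apply: IH; last exact: ltnW.
by rewrite (cardsD1 j S) jS in cS; case: cS.
Qed.

End PerSet.

Section Main.
Variables (R : realType) (F : finFieldType) (k n : nat) (G : 'M[F]_(k, n)).
Hypotheses (hk : (2 <= k)%N) (hkn : (k <= n)%N) (hG : \rank G = k).

Lemma n0 : (0 < n)%N.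
Proof. by apply: leq_trans hkn; apply: leq_trans hk. Qed.

Definition aa t : R := (Ncnt G t)%:R / n%:R ^+ t.

Lemma ns_card (S : {set 'I_n}) : ~~ spans G S -> (#|S| < n)%N.
Proof.
move=> nS; rewrite ltn_neqAle -[X in (_ <= X)%N](card_ord n) max_card andbT.
apply: contra nS => /eqP cS.
have -> : S = finset.setT.
  apply/eqP; by rewrite eqEcard finset.subsetT finset.cardsT card_ord cS leqnn.
exact: spansT.
Qed.

Lemma A_cvg : (fun M => \sum_(t < M) aa t) @ \oo --> \sum_(S : {set 'I_n} | ~~ spans G S) cc R n #|S|.
Proof.
have -> : (fun M => \sum_(t < M) aa t) = fun M => \sum_(S : {set 'I_n} | ~~ spans G S) FS R S M.
  apply: funext => M; rewrite /FS exchange_big /=; apply: eq_bigr => t _.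
  by rewrite /aa N_sum natr_sum mulr_suml.
apply: (@cvg_bigsum _ _ _ _ (fun S => FS R S) (fun S => cc R n #|S|)) => S nS.
by apply: FS_cvg => //; [exact: n0 | exact: ns_card].
Qed.

Lemma Ma_cvg : (fun M : nat => M%:R * aa M) @ \oo --> 0.
Proof.
have -> : (fun M : nat => M%:R * aa M) = fun M =>
   \sum_(S : {set 'I_n} | ~~ spans G S) M%:R * ((fcnt S M)%:R / n%:R ^+ M).
  apply: funext => M; rewrite /aa N_sum natr_sum mulr_suml mulr_sumr //.
suff H : (fun M => \sum_(S : {set 'I_n} | ~~ spans G S) M%:R * ((fcnt S M)%:R / n%:R ^+ M))
   @ \oo --> \sum_(S : {set 'I_n} | ~~ spans G S) (0 : R) by move: H; rewrite big1.
apply: (@cvg_bigsum _ _ _ _ (fun S M => M%:R * ((fcnt S M)%:R / n%:R ^+ M)) (fun _ => 0)) => S nS.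
have Sn := ns_card nS.
have r0 : 0 <= #|S|%:R / n%:R :> R by rewrite divr_ge0.
have r1 : #|S|%:R / n%:R < 1 :> R.
  by rewrite ltr_pdivrMr ?ltr0n ?n0 // mul1r ltr_nat.
apply: (@squeeze_cvgr _ _ _ _ (fun _ => 0) (fun M => M%:R * (#|S|%:R / n%:R) ^+ M)).
- near=> M; apply/andP; split; first by rewrite mulr_ge0 ?divr_ge0 ?exprn_ge0.
  rewrite ler_wpM2l // expr_div_n ler_pM2r ?invr_gt0 ?exprn_gt0 ?ltr0n ?n0 // -natrX ler_nat.
  exact: f_le.
- exact: cvg_cst.
- exact: cvg_Mpow0.
Unshelve. all: by end_near.
Qed.


Lemma p_eq M : prob_stop R G M.+1 = aa M - aa M.+1.
Proof.
have e := congr1 (fun x => x%:R : R) (stop_rec G M); rewrite /= natrD natrM in e.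
have -> : prob_stop R G M.+1 = (n%:R * (Ncnt G M)%:R - (Ncnt G M.+1)%:R) / n%:R ^+ M.+1.
  by rewrite /prob_stop -e addrK.
rewrite /aa exprS; have hn : n%:R != 0 :> R by rewrite pnatr_eq0 -lt0n n0.
have hm : n%:R ^+ M != 0 :> R by rewrite expf_neq0.
move: hn hm; move: (n%:R : R) (n%:R ^+ M : R) ((Ncnt G M)%:R : R) ((Ncnt G M.+1)%:R : R).
move=> a b c d ha hb; field. by rewrite ha hb.
Qed.

Lemma p0 : prob_stop R G 0 = 0.
Proof. by rewrite /prob_stop stop0 ?mul0r //; apply: leq_trans hk. Qed.

Lemma P_eq M : \sum_(t < M.+1) t%:R * prob_stop R G t = \sum_(t < M) aa t - M%:R * aa M.
Proof.
elim: M => [|M IH]; first by rewrite big_ord1 big_ord0 !mul0r subr0.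
rewrite big_ord_recr /= IH p_eq big_ord_recr /=.
rewrite -[M.+1]addn1 natrD; ring.
Qed.

Lemma PP_cvg : (fun M => \sum_(0 <= t < M) t%:R * prob_stop R G t) @ \oo -->
  \sum_(S : {set 'I_n} | ~~ spans G S) cc R n #|S|.
Proof.
rewrite -cvg_shiftS /=.
have -> : (fun M => \sum_(0 <= t < M.+1) t%:R * prob_stop R G t) =
   fun M => \sum_(t < M) aa t - M%:R * aa M.
  by apply: funext => M; rewrite big_mkord P_eq.
by have := cvgB A_cvg Ma_cvg; rewrite subr0; apply; exact: filter_on_Filter.
Qed.

Lemma ED : expected_draws R G = (\sum_(S : {set 'I_n} | ~~ spans G S) cc R n #|S|)%:E.
Proof.
rewrite /expected_draws.
have -> : (fun M => (\sum_(0 <= t < M) (t%:R * prob_stop R G t)%:E)%E) =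
   EFin \o (fun M => \sum_(0 <= t < M) t%:R * prob_stop R G t).
  by apply: funext => M; rewrite /= sumEFin.
rewrite EFin_lim; last exact: cvgP PP_cvg.
by congr EFin; apply: cvg_lim => //; exact: PP_cvg.
Qed.


Lemma subS_le a b : (b < a)%N -> (a - b.+1 <= a.-1)%N.
Proof. by case: a => // a _; rewrite subSS leq_subr. Qed.

Lemma sum_by_card (Q : pred {set 'I_n}) :
  \sum_(S : {set 'I_n} | Q S) cc R n #|S| =
  \sum_(s < n.+1) (#|[set S : {set 'I_n} | (#|S| == s) && Q S]%SET|)%:R * cc R n s.
Proof.
rewrite (partition_big (fun S : {set 'I_n} => inord #|S| : 'I_n.+1) xpredT) //=.
apply: eq_bigr => s _.
have cle : forall S : {set 'I_n}, (#|S| < n.+1)%N.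
  by move=> S; rewrite ltnS -[X in (_ <= X)%N](card_ord n) max_card.
rewrite (eq_bigr (fun _ => cc R n s)); last first.
  by move=> S /andP [_ /eqP <-]; rewrite inordK.
rewrite sumr_const mulr_natl; congr (_ *+ _).
apply: eq_card => S; rewrite inE /in_mem /= andbC; congr (_ && _).
by rewrite -val_eqE /= inordK.
Qed.

Lemma ccn : cc R n n = 0.
Proof. by rewrite /cc bin_small ?invr0 // prednK ?n0. Qed.

Lemma final : \sum_(S : {set 'I_n} | ~~ spans G S) cc R n #|S| =
  n%:R * harmonic_number R n - \sum_(k <= s < n) (alpha G s)%:R / ('C(n.-1, s))%:R.
Proof.
have h := bigID (fun S => spans G S) xpredT (fun S : {set 'I_n} => cc R n #|S|).
have -> : \sum_(S : {set 'I_n} | ~~ spans G S) cc R n #|S| =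
   \sum_(S : {set 'I_n}) cc R n #|S| - \sum_(S : {set 'I_n} | spans G S) cc R n #|S|.
  by rewrite h /= addrC addrK.
rewrite (sum_by_card xpredT) (sum_by_card (fun S => spans G S)).
rewrite !big_ord_recr /= ccn !mulr0 !addr0.
congr (_ - _).
  rewrite /harmonic_number mulr_sumr (reindex_inj rev_ord_inj) /=; apply: eq_bigr => s _.
  rewrite (eq_card (B := [set S : {set 'I_n} | #|S| == (n - s.+1)%N]%SET)); last first.
    by move=> S; rewrite !inE andbT.
  rewrite card_draws card_ord /cc.
  have sn : (s < n)%N := ltn_ord s.
  set m := (n - s.+1)%N.
  have nm : (n - m = s.+1)%N by rewrite /m subKn.
  have hb := mul_bin_down n m; rewrite nm in hb.
  have mn : (m <= n.-1)%N by apply: subS_le.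
  have C0 : ('C(n.-1, m)%:R : R) != 0 by rewrite pnatr_eq0 -lt0n bin_gt0.
  have s0 : (s.+1%:R : R) != 0 by rewrite pnatr_eq0.
  have e : ('C(n, m)%:R : R) = n%:R * 'C(n.-1, m)%:R / s.+1%:R.
    by rewrite -natrM hb natrM (mulrC (s.+1%:R)) mulfK.
  rewrite e; move: C0 s0; move: ('C(n.-1, m)%:R : R) (s.+1%:R : R) (n%:R : R) => a b c ha hb'.
  field. by rewrite ha hb'.
rewrite -(big_mkord xpredT (fun i => (#|[set S : {set 'I_n} | (#|S| == i) && spans G S]%SET|)%:R * cc R n i)).
rewrite (big_cat_nat (n := k)) //= big_nat_cond big1 ?add0r; last first.
  move=> i /andP [/andP [_ ik] _].
  suff -> : #|[set S : {set 'I_n} | (#|S| == i) && spans G S]%SET| = 0%N by rewrite mul0r.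
  apply/eqP; rewrite cards_eq0; apply/eqP/setP => S; rewrite !inE.
  apply/negbTE/andP => [[/eqP cS /spans_card]]; rewrite cS leqNgt ik //.
by apply: eq_bigr => i _; rewrite /alpha /cc.
Qed.

End Main.

Local Close Scope classical_set_scope.
Unset Implicit Arguments.
Local Open Scope ring_scope.

Theorem mainTheorem3 (R : realType) (F : finFieldType) (k n : nat)
  (G : 'M[F]_(k, n)) (hk : (2 <= k)%N) (hkn : (k <= n)%N) (hG : \rank G = k) :
  expected_draws R G =
  (n%:R * harmonic_number R n
     - \sum_(k <= s < n) (alpha G s)%:R / ('C(n.-1, s))%:R)%:E.
Proof.
by rewrite (ED R hk hkn hG) (final R G hk hkn).
Qed.
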